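(* Let $\mathcal N=(Q,\Sigma,\delta,I,F)$ be an NFA with $L=\mathcal L(\mathcal N)$. Then $\mathsf G^r(\mathcal N)$ (equivalently, the determinization $\mathcal N^D$) is the minimal DFA for $L$ (up to isomorphism) if and only if for every $q\in Q$, $P_{\sim^r_L}(W^{\mathcal N}_{I,q})=W^{\mathcal N}_{I,q}$.
   Context: NFA $\mathcal N=(Q,\Sigma,\delta,I,F)$ with $\delta:Q\times\Sigma\to\wp(Q)$ extended to words as $\hat\delta$; $W^{\mathcal N}_{S,T}=\{w\in\Sigma^*\mid\exists q\in S,q'\in T: q'\in\hat\delta(q,w)\}$ (singletons without braces); $\mathrm{post}^{\mathcal N}_w(S)=\{q\mid w\in W^{\mathcal N}_{S,q}\}$; $\mathcal L(\mathcal N)=W^{\mathcal N}_{I,F}$. $u\sim^r_L v\iff u^{-1}L=v^{-1}L$ where $u^{-1}L=\{x\mid ux\in L\}$; $u\sim^r_{\mathcal N}v\iff \mathrm{post}^{\mathcal N}_u(I)=\mathrm{post}^{\mathcal N}_v(I)$. For an equivalence $\sim$, $P_\sim(u)$ is the class of $u$ and $P_\sim(S)=\bigcup_{u\in S}P_\sim(u)$. $\mathsf G^r(\mathcal N)$ is the DFA with states $\{P_{\sim^r_{\mathcal N}}(u)\mid u\in\Sigma^*\}$, initial state $P_{\sim^r_{\mathcal N}}(\varepsilon)$, final states $\{P_{\sim^r_{\mathcal N}}(u)\mid u\in L\}$, and transition from $P_{\sim^r_{\mathcal N}}(u)$ on $a$ to $P_{\sim^r_{\mathcal N}}(ua)$;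 it is isomorphic to the reachable subset-construction DFA $\mathcal N^D$. The minimal DFA for $L$ is the unique (up to isomorphism) complete DFA for $L$ with fewest states. *)

(* Defs.v *)
From Stdlib Require Import ClassicalEpsilon.
From HB Require Import structures.
From mathcomp Require Import all_boot.
Set Implicit Arguments. Unset Strict Implicit. Unset Printing Implicit Defensive.

Section Automata.
Variable Sigma : finType.

Definition lang := seq Sigma -> Prop.

Record nfa := NFA {
  nstate : finType;
  ndelta : nstate -> Sigma -> {set nstate};
  ninit  : {set nstate};
  nfinal : {set nstate} }.

Definition post (N : nfa) (w : seq Sigma) (S : {set nstate N}) : {set nstate N} :=
  foldl (fun (X : {set nstate N}) a => \bigcup_(q in X) ndelta q a) S w.

Definition hdelta (N : nfa) (q : nstate N) (w : seq Sigma) := @post N w [set q].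

Definition Wl (N : nfa) (S T : {set nstate N}) : lang :=
  fun w => exists q q', [/\ q \in S, q' \in T & q' \in hdelta q w].

Definition nlang (N : nfa) : lang := Wl (ninit N) (nfinal N).

Definition rquot (L : lang) (u : seq Sigma) : lang := fun x => L (u ++ x).
Definition rnerode (L : lang) (u v : seq Sigma) : Prop :=
  forall x, rquot L u x <-> rquot L v x.

Definition closure_of (R : seq Sigma -> seq Sigma -> Prop) (S : lang) : lang :=
  fun w => exists2 u, S u & R u w.

Record dfa := DFA {
  dstate : finType;
  dinit  : dstate;
  ddelta : dstate -> Sigma -> dstate;
  dfinal : pred dstate }.

Definition dlang (A : dfa) : lang := fun w => @dfinal A (foldl (@ddelta A) (@dinit A) w).

Definition accepts (A : dfa) (L : lang) := forall w, dlang A w <-> L w.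

(* A is a minimal DFA for L: it recognises L and has fewest states among all
   complete DFAs recognising L (the minimal DFA is unique up to isomorphism). *)
Definition is_minimal_dfa (A : dfa) (L : lang) :=
  accepts A L /\ forall B : dfa, accepts B L -> #|dstate A| <= #|dstate B|.

(* Determinization N^D restricted to reachable subsets, isomorphic to G^r(N):
   states are the sets post_u(I) for u in Sigma^* *)
Definition reachable (N : nfa) (S : {set nstate N}) : Prop :=
  exists u, @post N u (ninit N) = S.

Definition reachb (N : nfa) (S : {set nstate N}) : bool :=
  if excluded_middle_informative (reachable S) then true else false.

Lemma reachbP (N : nfa) (S : {set nstate N}) : reflect (reachable S) (reachb S).
Proof.
rewrite /reachb; case: excluded_middle_informative => H; [left|right]; exact H.
Qed.

Definition rstate (N : nfa) := {S : {set nstate N} | reachb S}.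

Lemma reach_init (N : nfa) : reachb (ninit N).
Proof. by apply/reachbP; exists [::]. Qed.

Lemma reach_step (N : nfa) (S : rstate N) (a : Sigma) :
  reachb (@post N [:: a] (val S)).
Proof.
case: S => S /= /reachbP [u Hu]; apply/reachbP; exists (rcons u a).
by rewrite /post -cats1 foldl_cat -/(@post N u _) Hu.
Qed.

Definition determinize (N : nfa) : dfa :=
  @DFA (rstate N) (exist _ (ninit N) (reach_init N))
       (fun S a => exist _ (@post N [:: a] (val S)) (reach_step S a))
       (fun S => val S :&: nfinal N != set0).

End Automata.

(* Main.v *)
Require Import Defs.
From Stdlib Require Import ClassicalEpsilon.
From mathcomp Require Import all_boot.

Section Aux.
Variable Sigma : finType.
Variable N : nfa Sigma.
Notation Q := (nstate N).
Notation I := (ninit N).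
Notation F := (nfinal N).

Lemma post_cat u x (S : {set Q}) : @post _ N (u ++ x) S = @post _ N x (@post _ N u S).
Proof. by rewrite /post foldl_cat. Qed.

Lemma post_mem w (S : {set Q}) q' :
  q' \in @post _ N w S <-> exists2 q, q \in S & q' \in @post _ N w [set q].
Proof.
elim: w S => [|a w IH] S /=.
  split; first by move=> H; exists q'; rewrite ?set11.
  by case=> q Hq; rewrite /post /= in_set1 => /eqP ->.
change (q' \in @post _ N w (\bigcup_(q in S) ndelta q a) <->
  exists2 q, q \in S & q' \in @post _ N w (\bigcup_(p in [set q]) ndelta p a)).
rewrite IH; split.
  case=> r /bigcupP [p Hp Hr] Hq; exists p => //.
  by rewrite big_set1; apply/IH; exists r.
case=> p Hp; rewrite big_set1 => /IH [r Hr Hq]; exists r => //.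
by apply/bigcupP; exists p.
Qed.

Definition accb (S : {set Q}) x := @post _ N x S :&: F != set0.

Lemma nlang_acc w : nlang N w <-> accb I w.
Proof.
rewrite /nlang /Wl /accb; split.
  case=> q [q'] [Hq Hq' Hd]; apply/set0Pn; exists q'; rewrite inE Hq' andbT.
  by apply/post_mem; exists q.
case/set0Pn => q'; rewrite inE => /andP [/post_mem [q Hq Hd] Hq'].
by exists q, q'.
Qed.

Lemma accb_cat S u x : accb S (u ++ x) = accb (@post _ N u S) x.
Proof. by rewrite /accb post_cat. Qed.

Lemma rnerode_post u v :
  rnerode (nlang N) u v <-> forall x, accb (@post _ N u I) x = accb (@post _ N v I) x.
Proof.
rewrite /rnerode /rquot; split => H x.
  apply/idP/idP => Hx.
    by rewrite -accb_cat; apply/nlang_acc/H/nlang_acc; rewrite accb_cat.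
  by rewrite -accb_cat; apply/nlang_acc/H/nlang_acc; rewrite accb_cat.
by rewrite !nlang_acc !accb_cat H.
Qed.

Lemma Wl_post q w : Wl I [set q] w <-> q \in @post _ N w I.
Proof.
rewrite post_mem /Wl; split.
  by case=> p [q''] [Hp /set1P -> Hd]; exists p.
by case=> p Hp Hd; exists p, q; rewrite set11.
Qed.

Notation D := (determinize N).

Lemma det_val w (S : dstate D) :
  val (foldl (@ddelta _ D) S w) = @post _ N w (val S).
Proof. by elim: w S => [|a w IH] S //=; rewrite IH. Qed.

Lemma det_accepts : accepts D (nlang N).
Proof.
move=> w; rewrite nlang_acc /dlang /= det_val /=.
by rewrite /accb; split => /idP.
Qed.

Notation R := (rstate N).

Definition E (S T : R) := forall x, accb (val S) x = accb (val T) x.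
Definition Eb (S T : R) : bool :=
  if excluded_middle_informative (E S T) then true else false.
Lemma EbP S T : reflect (E S T) (Eb S T).
Proof. rewrite /Eb; case: excluded_middle_informative => H; [left|right]; exact H. Qed.

Definition canon (S : R) : R := odflt S [pick T | Eb T S].

Lemma canonE S : E (canon S) S.
Proof.
rewrite /canon; case: pickP => [T /EbP //|H] /=.
by move=> x.
Qed.

Lemma canon_eq S S' : E S S' -> canon S = canon S'.
Proof.
move=> H; rewrite /canon.
have ->: [pick T | Eb T S] = [pick T | Eb T S'].
  apply: eq_pick => T; apply/EbP/EbP => H1 x; first by rewrite H1 H.
  by rewrite H1 -H.
case: pickP => [//|H0].
by have := H0 S'; move/EbP; case => x.
Qed.

Lemma canon_idem S : canon (canon S) = canon S.
Proof. exact: canon_eq (canonE S). Qed.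

Lemma E_step (S T : R) a : E S T -> E (@ddelta _ D S a) (@ddelta _ D T a).
Proof. by move=> H x; have := H (a :: x). Qed.

Definition Bst := {S : R | canon S == S}.
Definition Binit : Bst := exist _ (canon (@dinit _ D)) (introT eqP (canon_idem _)).
Definition Bdelta (c : Bst) (a : Sigma) : Bst :=
  exist _ (canon (@ddelta _ D (val c) a)) (introT eqP (canon_idem _)).
Definition B : dfa Sigma := @DFA Sigma Bst Binit Bdelta
  (fun c => @dfinal _ D (val c)).

Lemma B_inv w (c : Bst) (S : R) :
  E (val c) S -> E (val (foldl Bdelta c w)) (foldl (@ddelta _ D) S w).
Proof.
elim: w c S => [|a w IH] c S //= H; apply: IH => x /=.
by rewrite (canonE _ x); apply: E_step.
Qed.

Lemma B_accepts : accepts B (nlang N).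
Proof.
move=> w; rewrite -det_accepts /dlang /=.
have := @B_inv w Binit (@dinit _ D) (canonE _) [::].
by rewrite /accb /= => ->.
Qed.

Lemma main_fwd : is_minimal_dfa D (nlang N) ->
  forall u v, rnerode (nlang N) u v -> @post _ N u I = @post _ N v I.
Proof.
case=> _ Hmin u v /rnerode_post Huv.
case: (eqVneq (@post _ N u I) (@post _ N v I)) => // Hne; exfalso.
have := Hmin B B_accepts; apply/negP; rewrite -ltnNge /=.
rewrite card_sig.
set S := foldl (@ddelta _ D) (@dinit _ D) u.
set T := foldl (@ddelta _ D) (@dinit _ D) v.
have HS : val S = @post _ N u I by rewrite det_val.
have HT : val T = @post _ N v I by rewrite det_val.
have HST : canon S = canon T by apply: canon_eq => x; rewrite HS HT.
have [X HX] : exists X : R, canon X != X.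
  case: (eqVneq (canon S) S) => [ES|]; last by exists S.
  exists T; apply/negP => /eqP ET; move: Hne; rewrite -HS -HT -ES HST ET.
  by rewrite eqxx.
rewrite -(cardC [pred x | canon x == x]) -[X in X < _]addn0 ltn_add2l.
by apply/card_gt0P; exists X; rewrite !inE.
Qed.

Lemma main_bwd : (forall u v, rnerode (nlang N) u v -> @post _ N u I = @post _ N v I) ->
  is_minimal_dfa D (nlang N).
Proof.
move=> H; split; first exact: det_accepts.
move=> B' HB'.
have word : forall S : R, {u | @post _ N u I = val S}.
  move=> S; apply: constructive_indefinite_description.
  by case: S => S /= /reachbP.
pose h (S : R) := foldl (@ddelta _ B') (@dinit _ B') (sval (word S)).
have hinj : injective h.
  move=> S T Hh; apply: val_inj.
  move: Hh; rewrite /h; case: (word S) => u Hu; case: (word T) => v Hv /= Hh.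
  rewrite -Hu -Hv; apply: H => x; rewrite /rquot -!HB' /dlang !foldl_cat Hh.
  by [].
exact: leq_card hinj.
Qed.

End Aux.

Theorem theorem2 (Sigma : finType) (N : nfa Sigma) :
  is_minimal_dfa (determinize N) (nlang N) <->
  (forall q : nstate N,
     forall w, closure_of (rnerode (nlang N)) (Wl (ninit N) [set q]) w
               <-> Wl (ninit N) [set q] w).
Proof.
split.
  move=> /main_fwd H q w; split; last by move=> Hw; exists w => // x.
  by case=> u /Wl_post Hu /H Huw; apply/Wl_post; rewrite -Huw.
move=> H; apply: main_bwd => u v Huv; apply/setP => q.
apply/idP/idP => Hq.
  by apply/Wl_post; apply/H; exists u => //; apply/Wl_post.
apply/Wl_post; apply/H; exists v; first by apply/Wl_post.
by move=> x; split => /Huv.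
Qed.
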